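(* Let $(\Delta,G)$ be a stable admissible pair such that $\Delta$ is mutation-finite. Then the quotient $\Delta/G$ is mutation-finite.
   Context: Here $\Delta$ is identified with a skew-symmetrizable matrix $A=(a_{ij})\in M_{Q_0}(\mathbb Z)$, $Q_0$ finite ($DA$ skew-symmetric for a positive integer diagonal $D$). Mutation $\mu_k(B)=(b'_{ij})$: $b'_{ij}=-b_{ij}$ if $k\in\{i,j\}$, else $b_{ij}+\tfrac12(|b_{ik}|b_{kj}+b_{ik}|b_{kj}|)$; $B$ is mutation-finite if the set $\mathrm{Mut}(B)$ of matrices obtained from $B$ by finite sequences of mutations is finite. A permutation $g$ of $Q_0$ is an automorphism of $B$ if $b_{gi,gj}=b_{ij}$; a group $G$ of automorphisms is admissible ($(B,G)$ an admissible pair) if for distinct $i,j$ in the same orbit there is no path of length $1$ or $2$ from $i$ to $j$ in the quiver of $B$ ($b_{ij}\le0$ and no $k$ with $b_{ik}>0$, $b_{kj}>0$). With $\overline Q_0$ the set of orbits, $A/G\in M_{\overline Q_0}(\mathbb Z)$ has entries $(A/G)_{\mathbf i,\mathbf j}=\sum_{k\in\mathbf i}a_{k,j}$ ($j\in\mathbf j$). Orbit mutation $\mu^G_{\mathbf i}=\prod_{j\in\mathbf i}\mu_j$; $(A,G)$ is stable if for every finite sequence of orbits all pairs $(\mu^G_{\mathbf i_m}\circ\cdots\circ\mu^G_{\mathbf i_1}(A),G)$ are admissible. *)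

(* Defs.v *)
From HB Require Import structures.
From mathcomp Require Import all_boot all_order all_algebra all_fingroup.
Set Implicit Arguments.
Unset Strict Implicit.
Unset Printing Implicit Defensive.
Import Order.TTheory GRing.Theory Num.Theory.
Local Open Scope ring_scope.

Definition emx (T : finType) := {ffun T * T -> int}.

Definition skew_symmetrizable (T : finType) (B : emx T) : Prop :=
  exists D : T -> int, (forall i, 0 < D i) /\
    forall i j, D i * B (i, j) = - (D j * B (j, i)).

Definition mutate (T : finType) (k : T) (B : emx T) : emx T :=
  [ffun p : T * T =>
     if (p.1 == k) || (p.2 == k) then - B p
     else B p + ((`|B (p.1, k)| * B (k, p.2) + B (p.1, k) * `|B (k, p.2)|) %/ 2)%Z].

Definition mutate_seq (T : finType) (B : emx T) (s : seq T) : emx T :=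
  foldl (fun B' k => mutate k B') B s.

Definition mutation_finite (T : finType) (B : emx T) : Prop :=
  exists S : seq (emx T), forall s : seq T, mutate_seq B s \in S.

Definition is_automorphism (T : finType) (B : emx T) (g : {perm T}) : Prop :=
  forall i j, B (g i, g j) = B (i, j).

(* (B,G) admissible: G acts by automorphisms and for distinct i, j in the same
   orbit there is no path of length 1 or 2 from i to j. *)
Definition admissible (T : finType) (B : emx T) (G : {group {perm T}}) : Prop :=
  (forall g, g \in G -> is_automorphism B g) /\
  (forall i j, j \in orbit 'P G i -> i != j ->
     B (i, j) <= 0 /\ ~ (exists k, 0 < B (i, k) /\ 0 < B (k, j))).

Definition orbT (T : finType) (G : {group {perm T}}) : finType :=
  {X : {set T} | X \in orbit 'P G @: [set: T]}.

Definition orbit_mutate (T : finType) (G : {group {perm T}}) (I : orbT G)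
  (B : emx T) : emx T := mutate_seq B (enum (val I)).

Definition orbit_mutate_seq (T : finType) (G : {group {perm T}}) (B : emx T)
  (s : seq (orbT G)) : emx T := foldl (fun B' I => orbit_mutate I B') B s.

Definition stable (T : finType) (A : emx T) (G : {group {perm T}}) : Prop :=
  forall s : seq (orbT G), admissible (orbit_mutate_seq A s) G.

Definition quotient_mx (T : finType) (A : emx T) (G : {group {perm T}})
  : emx (orbT G) :=
  [ffun p : orbT G * orbT G =>
     (if [pick j in val p.2] is Some j then \sum_(k in val p.1) A (k, j)
      else 0) : int].

(* Main.v *)
From Pilot Require Import Defs.
From HB Require Import structures.
From mathcomp Require Import all_boot all_order all_algebra all_fingroup.
From mathcomp Require Import ring lra zify.
Set Implicit Arguments.
Unset Strict Implicit.
Unset Printing Implicit Defensive.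
Import Order.TTheory GRing.Theory Num.Theory.
Local Open Scope ring_scope.

Definition F (a b : int) : int := ((`|a| * b + a * `|b|) %/ 2)%Z.

Lemma mutateE (T : finType) k (B : emx T) p :
  mutate k B p = if (p.1 == k) || (p.2 == k) then - B p
                 else B p + F (B (p.1, k)) (B (k, p.2)).
Proof. by rewrite ffunE. Qed.

Lemma Fpp a b : 0 <= a -> 0 <= b -> F a b = a * b.
Proof.
move=> ha hb; rewrite /F (ger0_norm ha) (ger0_norm hb).
have -> : a * b + a * b = (a * b) * 2 by ring.
by rewrite mulzK.
Qed.

Lemma Fnn a b : a <= 0 -> b <= 0 -> F a b = - (a * b).
Proof.
move=> ha hb; rewrite /F (ler0_norm ha) (ler0_norm hb).
have -> : - a * b + a * - b = (- (a * b)) * 2 by ring.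
by rewrite mulzK.
Qed.

Lemma Fpn a b : 0 <= a -> b <= 0 -> F a b = 0.
Proof.
move=> ha hb; rewrite /F (ger0_norm ha) (ler0_norm hb).
have -> : a * b + a * - b = 0 by ring.
by [].
Qed.

Lemma Fnp a b : a <= 0 -> 0 <= b -> F a b = 0.
Proof.
move=> ha hb; rewrite /F (ler0_norm ha) (ger0_norm hb).
have -> : - a * b + a * b = 0 by ring.
by [].
Qed.

Lemma F0l b : F 0 b = 0.
Proof. by rewrite /F normr0 !mul0r add0r. Qed.
Lemma F0r a : F a 0 = 0.
Proof. by rewrite /F normr0 !mulr0 add0r. Qed.

Lemma sign_le (d e x y : int) : 0 < d -> 0 < e -> d * x = - (e * y) ->
  (0 <= x) = (y <= 0).
Proof.
move=> hd he E.
by rewrite -(pmulr_rge0 x hd) E oppr_ge0 (pmulr_rle0 y he).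
Qed.

Lemma sign_lt (d e x y : int) : 0 < d -> 0 < e -> d * x = - (e * y) ->
  (0 < x) = (y < 0).
Proof.
move=> hd he E.
by rewrite -(pmulr_rgt0 x hd) E oppr_gt0 (pmulr_rlt0 y he).
Qed.

Lemma mutate_skew (T : finType) (B : emx T) k (D : T -> int) :
  (forall i, 0 < D i) -> (forall i j, D i * B (i, j) = - (D j * B (j, i))) ->
  forall i j, D i * mutate k B (i, j) = - (D j * mutate k B (j, i)).
Proof.
move=> Dp HD i j; rewrite !mutateE /= (orbC (j == k)).
case: ifP => _; first by rewrite !mulrN HD.
have E : D i * (B (i, k) * B (k, j)) = D j * (B (j, k) * B (k, i)).
  apply: (mulfI (lt0r_neq0 (Dp k))).
  transitivity ((D i * B (i, k)) * (D k * B (k, j))); first by ring.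
  rewrite (HD i k) (HD k j); ring.
have s1 := sign_le (Dp i) (Dp k) (HD i k).
have s2 := sign_le (Dp k) (Dp i) (HD k i).
have s3 := sign_le (Dp k) (Dp j) (HD k j).
have s4 := sign_le (Dp j) (Dp k) (HD j k).
rewrite !mulrDr.
case/orP: (le_total 0 (B (i, k))) => ha; case/orP: (le_total 0 (B (k, j))) => hb.
- have ha' : B (k, i) <= 0 by rewrite -s1.
  have hb' : B (j, k) <= 0 by rewrite -s3.
  rewrite (Fpp ha hb) (Fnn hb' ha') (HD i j) E; ring.
- have ha' : B (k, i) <= 0 by rewrite -s1.
  have hb' : 0 <= B (j, k) by rewrite s4.
  rewrite (Fpn ha hb) (Fpn hb' ha') (HD i j); ring.
- have ha' : 0 <= B (k, i) by rewrite s2.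
  have hb' : B (j, k) <= 0 by rewrite -s3.
  rewrite (Fnp ha hb) (Fnp hb' ha') (HD i j); ring.
- have ha' : 0 <= B (k, i) by rewrite s2.
  have hb' : 0 <= B (j, k) by rewrite s4.
  rewrite (Fnn ha hb) (Fpp hb' ha') (HD i j) mulrN E; ring.
Qed.

Lemma mutate_seq_skew (T : finType) (s : seq T) (B : emx T) :
  skew_symmetrizable B -> skew_symmetrizable (mutate_seq B s).
Proof.
elim: s B => [|k s IH] B //= [D [Dp HD]]; apply: IH.
by exists D; split => //; apply: mutate_skew.
Qed.

Lemma mutseqE (T : finType) (B : emx T) (I : {set T}) (s : seq T) :
  (forall i j, i \in I -> j \in I -> B (i, j) = 0) -> uniq s -> {subset s <= I} ->
  mutate_seq B s = [ffun p : T * T => if (p.1 \in s) || (p.2 \in s) then - B p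
       else B p + \sum_(j <- s) F (B (p.1, j)) (B (j, p.2))].
Proof.
move=> Z; elim/last_ind: s => [|s k IH] Us Ss.
  by apply/ffunP => -[x y]; rewrite ffunE /= big_nil addr0.
rewrite /mutate_seq foldl_rcons -/(mutate_seq B s).
rewrite rcons_uniq in Us; case/andP: Us => ks Us.
have Ss' : {subset s <= I} by move=> z zs; apply: Ss; rewrite mem_rcons in_cons zs orbT.
have kI : k \in I by apply: Ss; rewrite mem_rcons mem_head.
rewrite (IH Us Ss'); apply/ffunP => -[x y]; rewrite mutateE !ffunE /=.
rewrite !mem_rcons !in_cons big_rcons /=.
have sumx0 : forall x', \sum_(j <- s) F (B (x', j)) (B (j, k)) = 0.
  by move=> x'; rewrite big_seq big1 // => j js; rewrite (Z j k) ?F0r //; apply: Ss'.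
have sum0y : forall y', \sum_(j <- s) F (B (k, j)) (B (j, y')) = 0.
  by move=> y'; rewrite big_seq big1 // => j js; rewrite (Z k j) ?F0l //; apply: Ss'.
have Mxk : (if (x \in s) || (k \in s) then - B (x, k) else B (x, k) + \sum_(j <- s) F (B (x, j)) (B (j, k))) = B (x, k).
  rewrite (negbTE ks) orbF; case: ifP => xs; last by rewrite sumx0 addr0.
  by rewrite Z ?oppr0 //; by apply: Ss'.
have Mky : (if (k \in s) || (y \in s) then - B (k, y) else B (k, y) + \sum_(j <- s) F (B (k, j)) (B (j, y))) = B (k, y).
  rewrite (negbTE ks) /=; case: ifP => ys; last by rewrite sum0y addr0.
  by rewrite Z ?oppr0 //; by apply: Ss'.
rewrite Mxk Mky.
case: (eqVneq x k) => [->|xk] /=.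
  rewrite (negbTE ks) /=; case: ifP => ys; first by rewrite Z ?oppr0 ?opprK //; by apply: Ss'.
  by rewrite sum0y addr0.
case: (eqVneq y k) => [->|yk] /=.
  rewrite (negbTE ks) orbF; case: ifP => xs; first by rewrite Z ?oppr0 ?opprK //; by apply: Ss'.
  by rewrite sumx0 addr0.
case: ifP => hs.
  case/orP: hs => hs.
    by rewrite (Z x k) ?F0l ?addr0 //; by apply: Ss'.
  by rewrite (Z k y) ?F0r ?addr0 //; by apply: Ss'.
by rewrite addrA.
Qed.

Section Orb.
Variables (T : finType) (G : {group {perm T}}).

Lemma orbT_ex (X : Pilot.Defs.orbT G) : exists x, val X = action.orbit 'P G x.
Proof. by case/imsetP: (valP X) => x _ ->; exists x. Qed.

Lemma orbT_same (X : Pilot.Defs.orbT G) i j : i \in val X -> j \in val X -> j \in action.orbit 'P G i.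
Proof.
case: (orbT_ex X) => x -> hi hj.
by apply: (orbit_trans hj); rewrite orbit_sym.
Qed.

Lemma orbT_act (X : Pilot.Defs.orbT G) i g : g \in G -> i \in val X -> g i \in val X.
Proof.
case: (orbT_ex X) => x -> hg hi.
have := mem_orbit 'P i hg; rewrite /= apermE => h.
exact: orbit_trans h hi.
Qed.

Lemma orbT_ne (X : Pilot.Defs.orbT G) : exists x, x \in val X.
Proof. by case: (orbT_ex X) => x ->; exists x; apply: orbit_refl. Qed.

Lemma orbT_disj (X Y : Pilot.Defs.orbT G) z : z \in val X -> z \in val Y -> X = Y.
Proof.
case: (orbT_ex X) => x EX; case: (orbT_ex Y) => y EY.
rewrite EX EY => hx hy; apply: val_inj; rewrite EX EY.
by rewrite -(orbit_eqP hx) -(orbit_eqP hy).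
Qed.

Lemma orbT_trans (X : Pilot.Defs.orbT G) i j : i \in val X -> j \in val X ->
  exists2 g, g \in G & g i = j.
Proof.
move=> hi hj; case/orbitP: (orbT_same hi hj) => g hg <-.
by exists g.
Qed.

End Orb.

Lemma coh (T : finType) (P Q : pred T) (M : T -> T -> int) :
  (forall a b a' b', P a -> Q b -> P a' -> Q b' -> 0 < M a b -> M a' b' < 0 -> False) ->
  (forall a b, P a -> Q b -> 0 <= M a b) \/ (forall a b, P a -> Q b -> M a b <= 0).
Proof.
move=> H.
case: (pickP [pred ab : T * T | [&& P ab.1, Q ab.2 & M ab.1 ab.2 < 0]]) => [[a' b']|hn].
  case/and3P => /= pa qb m; right => a b pa0 qb0; rewrite leNgt; apply/negP => m0.
  exact: (H a b a' b').
left => a b pa qb; rewrite leNgt; apply/negP => m.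
by have := hn (a, b); rewrite /= pa qb m.
Qed.

Section Main.
Variables (T : finType) (G : {group {perm T}}) (B : emx T).
Hypothesis Hs : skew_symmetrizable B.
Hypothesis Ha : admissible B G.

Lemma orb_zero (X : Pilot.Defs.orbT G) i j : i \in val X -> j \in val X -> B (i, j) = 0.
Proof.
case: Hs => D [Dp HD] hi hj.
case: (eqVneq i j) => [<-|ne].
  have h := HD i i; have dp := Dp i.
  have : D i * B (i, i) == 0 by apply/eqP; move: h; set x := D i * B (i, i); lia.
  by rewrite mulf_eq0 (gt_eqF dp) => /eqP.
have [h1 _] := Ha.2 i j (orbT_same hi hj) ne.
have [h2 _] := Ha.2 j i (orbT_same hj hi) ltac:(by rewrite eq_sym).
apply/eqP; rewrite eq_le h1 /= (sign_le (Dp i) (Dp j) (HD i j)); exact: h2.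
Qed.

Lemma SC1 (X : Pilot.Defs.orbT G) k k' j : k \in val X -> k' \in val X ->
  0 < B (k, j) -> B (k', j) < 0 -> False.
Proof.
case: Hs => D [Dp HD] hk hk' p n.
have p' : 0 < B (j, k') by rewrite (sign_lt (Dp j) (Dp k') (HD j k')).
case: (eqVneq k k') => [e|ne]; first by subst k'; move: (lt_trans p n); rewrite ltxx.
have [_ h] := Ha.2 k k' (orbT_same hk hk') ne.
by apply: h; exists j.
Qed.

Lemma SC2 (I : Pilot.Defs.orbT G) j j' y : j \in val I -> j' \in val I ->
  0 < B (j, y) -> B (j', y) < 0 -> False.
Proof.
case: Hs => D [Dp HD] hj hj' p n.
have p' : 0 < B (y, j') by rewrite (sign_lt (Dp y) (Dp j') (HD y j')).
case: (eqVneq j j') => [e|ne]; first by subst j'; move: (lt_trans p n); rewrite ltxx.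
have [_ h] := Ha.2 j j' (orbT_same hj hj') ne.
by apply: h; exists y.
Qed.

Lemma key (X I : Pilot.Defs.orbT G) y i0 : i0 \in val I ->
  \sum_(k in val X) \sum_(j in val I) F (B (k, j)) (B (j, y)) =
  F (\sum_(k in val X) B (k, i0)) (\sum_(j in val I) B (j, y)).
Proof.
move=> hi0.
have inv : forall j, j \in val I -> \sum_(k in val X) B (k, j) = \sum_(k in val X) B (k, i0).
  move=> j hj; case: (orbT_trans hi0 hj) => g hg <-.
  rewrite (reindex_inj (@perm_inj _ g)) /=.
  apply: eq_big => k.
    apply/idP/idP => h; last exact: orbT_act.
    by have := orbT_act (groupVr hg) h; rewrite permK.
  by move=> _; rewrite (Ha.1 g hg).
have C1 : (forall k j, k \in val X -> j \in val I -> 0 <= B (k, j)) \/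
          (forall k j, k \in val X -> j \in val I -> B (k, j) <= 0).
  apply: (coh (P := fun k => k \in val X) (Q := fun j => j \in val I) (M := fun k j => B (k, j))).
  move=> k j k' j' hk hj hk' hj' p n.
  case: (orbT_trans hj' hj) => g hg gj.
  apply: (SC1 (j := j) hk (orbT_act hg hk') p).
  by rewrite -gj (Ha.1 g hg).
have C2 : (forall j, j \in val I -> 0 <= B (j, y)) \/ (forall j, j \in val I -> B (j, y) <= 0).
  have H : forall a b a' b', a \in val I -> pred1 y b -> a' \in val I -> pred1 y b' ->
      0 < B (a, b) -> B (a', b') < 0 -> False.
    move=> j z j' z' hj /eqP -> hj' /eqP -> p n; exact: SC2 hj hj' p n.
  case: (coh H) => h; [left|right] => j hj; apply: h => //. all: try exact: eqxx.
case: C1 => C1; case: C2 => C2.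
- transitivity (\sum_(j in val I) (\sum_(k in val X) B (k, i0)) * B (j, y)).
    rewrite exchange_big; apply: eq_bigr => j hj; rewrite -(inv j hj) mulr_suml.
    apply: eq_bigr => k hk; apply: Fpp; [exact: C1 | exact: C2].
  rewrite -mulr_sumr Fpp //; first by apply: sumr_ge0 => k hk; apply: C1.
  by apply: sumr_ge0.
- rewrite big1; last by move=> k hk; rewrite big1 // => j hj; apply: Fpn; [exact: C1 | exact: C2].
  rewrite Fpn //; first by apply: sumr_ge0 => k hk; apply: C1.
  by apply: sumr_le0.
- rewrite big1; last by move=> k hk; rewrite big1 // => j hj; apply: Fnp; [exact: C1 | exact: C2].
  rewrite Fnp //; first by apply: sumr_le0 => k hk; apply: C1.
  by apply: sumr_ge0.
- transitivity (\sum_(j in val I) - ((\sum_(k in val X) B (k, i0)) * B (j, y))).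
    rewrite exchange_big; apply: eq_bigr => j hj; rewrite -(inv j hj) mulr_suml -sumrN.
    apply: eq_bigr => k hk; apply: Fnn; [exact: C1 | exact: C2].
  rewrite sumrN -mulr_sumr Fnn //; first by apply: sumr_le0 => k hk; apply: C1.
  by apply: sumr_le0.
Qed.

End Main.

Section Final.
Variables (T : finType) (G : {group {perm T}}).

Lemma pickE (Y : Pilot.Defs.orbT G) : exists y, [pick j in val Y] = Some y /\ y \in val Y.
Proof.
case: pickP => [y hy|hn]; first by exists y.
case: (orbT_ne Y) => x hx; by have := hn x; rewrite hx.
Qed.

Lemma qE (B : emx T) (X Y : Pilot.Defs.orbT G) y : [pick j in val Y] = Some y ->
  quotient_mx B G (X, Y) = \sum_(k in val X) B (k, y).
Proof. by move=> h; rewrite ffunE /= h. Qed.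

Lemma main_step (B : emx T) (I : Pilot.Defs.orbT G) :
  skew_symmetrizable B -> admissible B G ->
  mutate I (quotient_mx B G) = quotient_mx (orbit_mutate I B) G.
Proof.
move=> Hs Ha.
have Z : forall i j, i \in val I -> j \in val I -> B (i, j) = 0.
  by move=> i j; apply: orb_zero.
rewrite /orbit_mutate (mutseqE (I := val I) Z (enum_uniq _)); last first.
  by move=> z; rewrite mem_enum.
apply/ffunP => -[X Y]; rewrite mutateE /=.
case: (pickE Y) => y [py hy]; case: (pickE I) => i0 [pi hi].
rewrite !(qE _ _ py) (qE _ _ pi).
rewrite [RHS](eq_bigr (fun k => if (k \in val I) || (y \in val I) then - B (k, y)
   else B (k, y) + \sum_(j in val I) F (B (k, j)) (B (j, y)))); last first.
  by move=> k _; rewrite ffunE /= !mem_enum big_enum.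
case: (eqVneq X I) => [EX|nX] /=.
  rewrite -sumrN; apply: eq_bigr => k hk.
  by rewrite -EX hk.
case: (eqVneq Y I) => [EY|nY] /=.
  rewrite -sumrN; apply: eq_bigr => k hk.
  by rewrite -EY hy orbT.
have yI : y \notin val I by apply/negP => h; by rewrite (orbT_disj hy h) eqxx in nY.
rewrite [RHS](eq_bigr (fun k => B (k, y) + \sum_(j in val I) F (B (k, j)) (B (j, y)))); last first.
  move=> k hk; have kI : k \notin val I.
    by apply/negP => h; by rewrite (orbT_disj hk h) eqxx in nX.
  by rewrite (negbTE kI) (negbTE yI).
by rewrite big_split /= (key Hs Ha X y hi).
Qed.

Lemma orbit_mutate_seq_skew (s : seq (Pilot.Defs.orbT G)) (B : emx T) :
  skew_symmetrizable B -> skew_symmetrizable (orbit_mutate_seq B s).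
Proof.
elim: s B => [|I s IH] B //= Hs; apply: IH; exact: mutate_seq_skew.
Qed.

Lemma orbit_mutate_seqE (s : seq (Pilot.Defs.orbT G)) (B : emx T) :
  exists t, orbit_mutate_seq B s = mutate_seq B t.
Proof.
elim: s B => [|I s IH] B; first by exists [::].
case: (IH (orbit_mutate I B)) => t Et.
exists (enum (val I) ++ t).
by rewrite /= Et /mutate_seq foldl_cat.
Qed.

Lemma quot_seq (s : seq (Pilot.Defs.orbT G)) (B : emx T) :
  skew_symmetrizable B -> (forall t : seq (Pilot.Defs.orbT G), admissible (orbit_mutate_seq B t) G) ->
  mutate_seq (quotient_mx B G) s = quotient_mx (orbit_mutate_seq B s) G.
Proof.
elim: s B => [|I s IH] B Hs Hst //=.
rewrite (main_step I Hs (Hst [::])).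
apply: IH; first exact: mutate_seq_skew.
by move=> t; apply: (Hst (I :: t)).
Qed.

End Final.

Theorem mainTheorem17 (T : finType) (A : emx T) (G : {group {perm T}}) :
  skew_symmetrizable A -> admissible A G -> stable A G ->
  mutation_finite A -> mutation_finite (quotient_mx A G).
Proof.
move=> Hs Ha Hst [S HS].
exists (map (fun B => quotient_mx B G) S) => s.
rewrite (quot_seq s Hs Hst).
case: (orbit_mutate_seqE s A) => t ->.
exact: map_f.
Qed.
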